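(* Fix $n$ and $r$ with $0\le r<\lfloor n/2\rfloor$, and let $a=\lfloor n/2\rfloor$. For any prime power $q$, any nontrivial additive character $\psi$ of $\mathbb F_q$ and any rank-one matrix $T\in M_{a,n-a}(\mathbb F_q)$, the number $$\widehat 1_{\mathcal O_r}(T)=\sum_{A\in\mathcal O_r}\psi(\mathrm{trace}(T^tA))$$ is a positive integer, and as $q\to\infty$, $$\widehat 1_{\mathcal O_r}(T)=\left(\frac1{q^r}+o\!\left(\frac1{q^r}\right)\right)\#(\mathcal O_r).$$
   Context: $\mathcal O_r\subset M_{a,n-a}(\mathbb F_q)$ is the set of $a\times(n-a)$ matrices of rank $r$. *)

(* Defs.v *)
From HB Require Import structures.
From mathcomp Require Import all_boot all_order all_algebra all_field.
Set Implicit Arguments. Unset Strict Implicit. Unset Printing Implicit Defensive.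
Import Order.TTheory GRing.Theory Num.Theory.
Local Open Scope ring_scope.

Definition Orank (F : finFieldType) (m k r : nat) : {set 'M[F]_(m, k)} :=
  [set A : 'M[F]_(m, k) | \rank A == r].

Definition additive_char (F : finFieldType) (psi : F -> algC) : Prop :=
  psi 0 = 1 /\ forall x y : F, psi (x + y) = psi x * psi y.

Definition nontrivial_char (F : finFieldType) (psi : F -> algC) : Prop :=
  exists x : F, psi x != 1.

Definition fourier_Orank (F : finFieldType) (m k r : nat) (psi : F -> algC)
  (T : 'M[F]_(m, k)) : algC :=
  \sum_(A in Orank F m k r) psi (\tr (T^T *m A)).

(* Main.v *)
Require Import Defs.
From HB Require Import structures.
From mathcomp Require Import all_boot all_order all_algebra all_field.
From mathcomp Require Import zify ring.
Import Order.TTheory GRing.Theory Num.Theory.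
Local Open Scope ring_scope.
Lemma card_sub (F : finFieldType) s p (C : 'M[F]_(s, p)) :
  #|[set u : 'rV[F]_p | (u <= C)%MS]| = (#|F| ^ \rank C)%N.
Proof.
have -> : [set u : 'rV[F]_p | (u <= C)%MS] = [set x *m row_base C | x : 'rV[F]_(\rank C)].
  apply/setP => u; rewrite inE; apply/idP/imsetP.
    rewrite -(eq_row_base C) => /submxP [D ->]; by exists D.
  case=> x _ ->; apply: (submx_trans (submxMl _ _)); by rewrite eq_row_base.
rewrite card_imset ?cardsT ?card_mx ?mul1n //; exact: row_free_inj (row_base_free C).
Qed.

Lemma card_ker (F : finFieldType) p k (B : 'M[F]_(p, k)) :
  #|[set u : 'rV[F]_p | u *m B == 0]| = (#|F| ^ (p - \rank B))%N.
Proof.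
rewrite -mxrank_ker -card_sub; apply: eq_card => u; by rewrite !inE sub_kermx.
Qed.

Lemma mx11_eq0 (F : fieldType) (M : 'M[F]_1) : (M == 0) = (M 0 0 == 0).
Proof.
apply/eqP/eqP => [->|h]; first by rewrite mxE.
by apply/matrixP => i j; rewrite (ord1 i) (ord1 j) h mxE.
Qed.

Lemma rank_row_nz (F : fieldType) K (w : 'rV[F]_K) : w != 0 -> \rank w = 1%N.
Proof.
move=> wn; apply/eqP; rewrite eqn_leq rank_leq_row lt0n mxrank_eq0 wn.
by [].
Qed.

Lemma card_fiber1 (F : finFieldType) K (w : 'rV[F]_K) : w != 0 ->
  #|[set y : 'rV[F]_K | (y *m w^T) 0 0 == 1]| = (#|F| ^ (K - 1))%N.
Proof.
move=> wn.
have [j wj] : exists j, w 0 j != 0.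
  apply/existsP; apply: contraR wn; rewrite negb_exists => /forallP h.
  apply/eqP/matrixP => i l; rewrite (ord1 i) mxE; exact/eqP/negPn/h.
pose y0 : 'rV[F]_K := (w 0 j)^-1 *: delta_mx 0 j.
have fy0 : (y0 *m w^T) 0 0 = 1.
  rewrite mxE (bigD1 j) //= big1 => [|l lj]; rewrite !mxE.
    by rewrite !eqxx mulr1 addr0 mulVf.
  by rewrite (negbTE lj) andbF mulr0 mul0r.
rewrite -[X in (K - X)%N](rank_row_nz _ _ _ wn) -mxrank_tr -card_ker.
rewrite -(card_preimset _ (addIr y0)).
apply: eq_card => z; rewrite !inE mulmxDl mxE fy0 mx11_eq0.
by rewrite -subr_eq0 addrK.
Qed.

Lemma card_pre (F : finFieldType) m k (O : {set 'M[F]_(m,k)}) (h : 'M[F]_(m,k) -> 'M[F]_(m,k))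
  (P : pred 'M[F]_(m,k)) : injective h -> (forall A, (h A \in O) = (A \in O)) ->
  #|[set A in O | P (h A)]| = #|[set A in O | P A]|.
Proof.
move=> hi hO; rewrite -(card_preimset [set A in O | P A] hi); apply: eq_card => A.
by rewrite !inE hO.
Qed.

Lemma tr_pid1 (F : fieldType) m k (B : 'M[F]_(m.+1, k.+1)) :
  \tr ((pid_mx 1 : 'M[F]_(m.+1, k.+1))^T *m B) = B 0 0.
Proof.
rewrite /mxtrace (bigD1 ord0) //= big1 => [|i i0].
  rewrite mxE (bigD1 ord0) //= big1 => [|j j0]; rewrite !mxE.
    by rewrite eqxx /= mul1r !addr0.
  have /negbTE -> : (j : nat) != 0%N by [].
  by rewrite mul0r.
rewrite mxE big1 // => j _; rewrite !mxE.
have -> : (((j:nat) == i) && (j < 1))%N = false.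
  apply/negbTE/andP => -[/eqP e h1]; move/negP: i0; apply; apply/eqP/val_inj => /=.
  by rewrite -e; move: h1; case: (j : nat).
by rewrite mul0r.
Qed.

Lemma inv_rank1 (F : finFieldType) m k r (T : 'M[F]_(m.+1,k.+1)) (c : F) : \rank T = 1%N ->
  #|[set A in Orank F m.+1 k.+1 r | \tr (T^T *m A) == c]|
  = #|[set A in Orank F m.+1 k.+1 r | A 0 0 == c]|.
Proof.
move=> rT.
set L := col_ebase T; set U := row_ebase T.
have eT : T = L *m pid_mx 1 *m U by rewrite -{1}(mulmx_ebase T) rT.
have LTu : L^T \in unitmx by rewrite unitmx_tr col_ebase_unit.
have UTu : U^T \in unitmx by rewrite unitmx_tr row_ebase_unit.
pose h A := L^T *m A *m U^T.
have -> : [set A in Orank F m.+1 k.+1 r | \tr (T^T *m A) == c]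
   = [set A in Orank F m.+1 k.+1 r | (fun B => B 0 0 == c) (h A)].
  apply/setP => A; rewrite !inE /= -tr_pid1 /h eT !trmx_mul.
  by rewrite -!mulmxA mxtrace_mulC !mulmxA.
apply: card_pre.
  move=> A B /(can_inj (mulmxK UTu)) /(can_inj (mulKmx LTu)) //.
move=> A; rewrite !inE /h mxrankMfree ?row_free_unit //.
by rewrite eqmxMfull // row_full_unit.
Qed.

Lemma sum_ind (T : finType) (P : pred T) : (\sum_(x : T) (P x : nat))%N = #|[set x | P x]|.
Proof.
rewrite -sum1_card [RHS]big_mkcond /=; apply: eq_bigr => x _; rewrite inE; by case: (P x).
Qed.

Lemma sum_ind_in (T : finType) (X : pred T) (P : pred T) :
  (\sum_(x in X) (P x : nat))%N = #|[set x in X | P x]|.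
Proof.
rewrite -sum1_card [RHS]big_mkcond [LHS]big_mkcond /=; apply: eq_bigr => x _.
by rewrite inE; case: (x \in X); case: (P x).
Qed.

Lemma card_nz (F : finFieldType) M : #|[set x : 'rV[F]_M | x != 0]| = (#|F| ^ M - 1)%N.
Proof.
have -> : [set x : 'rV[F]_M | x != 0] = [set~ 0] by apply/setP => x; rewrite !inE.
by rewrite cardsC1 card_mx mul1n subn1.
Qed.

Lemma double_count (F : finFieldType) m k r :
  let q := #|F| in
  (#|Orank F m.+1 k.+1 r| * ((q ^ m.+1 - q ^ (m.+1 - r)) * q ^ k))%N
  = ((q ^ m.+1 - 1) * (q ^ k.+1 - 1) * #|[set A in Orank F m.+1 k.+1 r | A ord0 ord0 == 1%R]|)%N.
Proof.
move=> q.
set O := Orank F m.+1 k.+1 r.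
set N1 := #|[set A in O | A 0 0 == 1]|.
pose Z := (\sum_(A in O) \sum_(x : 'rV[F]_m.+1) \sum_(y : 'rV[F]_k.+1)
             ((x *m A *m y^T) ord0 ord0 == 1%R : nat))%N.
have h1 : Z = (#|O| * ((q ^ m.+1 - q ^ (m.+1 - r)) * q ^ k))%N.
  rewrite /Z -sum1_card big_distrl /=; apply: eq_bigr => A.
  rewrite inE => /eqP rA; rewrite mul1n.
  transitivity (\sum_(x : 'rV[F]_m.+1) ((x *m A != 0%R) : nat) * q ^ k)%N.
    apply: eq_bigr => x _.
    have -> : (\sum_(y : 'rV[F]_k.+1) ((x *m A *m y^T) ord0 ord0 == 1%R : nat))%N
        = #|[set y : 'rV[F]_k.+1 | (y *m (x *m A)^T) 0 0 == 1]|.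
      rewrite -sum_ind; apply: eq_bigr => y _.
      by rewrite -[y in RHS]trmxK -trmx_mul [_^T _ _]mxE.
    case: (eqVneq (x *m A) 0) => [->|nz]; last by rewrite card_fiber1 // subn1 mul1n.
    rewrite mul0n; apply/eqP; rewrite cards_eq0; apply/eqP/setP => y.
    by rewrite !inE trmx0 mulmx0 mxE eq_sym oner_eq0.
  rewrite -big_distrl /= sum_ind.
  congr (_ * _)%N.
  have := cardsC [set x : 'rV[F]_m.+1 | x *m A == 0%R].
  rewrite card_ker card_mx mul1n rA => <-.
  rewrite addKn; apply: eq_card => x; by rewrite !inE.
have h2 : Z = ((q ^ m.+1 - 1) * (q ^ k.+1 - 1) * N1)%N.
  rewrite /Z exchange_big /=.
  transitivity (\sum_(x : 'rV[F]_m.+1) \sum_(y : 'rV[F]_k.+1) ((x != 0%R) * (y != 0%R) * N1))%N.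
    apply: eq_bigr => x _; rewrite exchange_big /=; apply: eq_bigr => y _.
    have -> : (\sum_(A in O) ((x *m A *m y^T) ord0 ord0 == 1%R : nat))%N
        = #|[set A in O | (x *m A *m y^T) ord0 ord0 == 1%R]|.
      exact: sum_ind_in.
    case: (eqVneq x 0) => [->|xn].
      rewrite mul0n; apply/eqP; rewrite cards_eq0; apply/eqP/setP => A.
      by rewrite !inE mul0mx mul0mx mxE; case: (\rank A == r); rewrite //= eq_sym oner_eq0.
    case: (eqVneq y 0) => [->|yn].
      rewrite muln0 mul0n; apply/eqP; rewrite cards_eq0; apply/eqP/setP => A.
      by rewrite !inE trmx0 mulmx0 mxE; case: (\rank A == r); rewrite //= eq_sym oner_eq0.
    rewrite /= !mul1n /N1 -(inv_rank1 _ _ _ _ (x^T *m y)).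
      apply: eq_card => A; rewrite !inE trmx_mul trmxK mxtrace_mulC mulmxA.
      by rewrite mxtrace_mulC mulmxA /mxtrace big_ord1.
    rewrite mxrankMfree; first by rewrite mxrank_tr rank_row_nz.
    by rewrite /row_free rank_row_nz.
  transitivity (\sum_(x : 'rV[F]_m.+1) (x != 0%R) * ((\sum_(y : 'rV[F]_k.+1) (y != 0%R : nat)) * N1))%N.
    apply: eq_bigr => x _; rewrite big_distrl big_distrr /=; apply: eq_bigr => y _; by rewrite mulnA.
  by rewrite -big_distrl /= !sum_ind !card_nz mulnA.
by rewrite -h1 h2.
Qed.

Lemma sum_by_value (T : finType) (F : finType) (X : {set T}) (f : T -> F) (g : F -> algC) :
  \sum_(A in X) g (f A) = \sum_(c : F) (#|[set A in X | f A == c]|)%:R * g c.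
Proof.
rewrite (partition_big f xpredT) //=; apply: eq_bigr => c _.
rewrite (eq_bigr (fun=> g c)) => [|A /andP[_ /eqP->]] //.
rewrite sumr_const -[LHS]mulr_natl; congr (_%:R * _); apply: eq_card => A; by rewrite inE.
Qed.

Lemma sum_psi (F : finFieldType) (psi : F -> algC) :
  additive_char psi -> nontrivial_char psi -> \sum_(c : F) psi c = 0.
Proof.
case=> _ hadd [x hx].
have h : psi x * \sum_(c : F) psi c = \sum_(c : F) psi c.
  rewrite mulr_sumr [RHS](reindex_inj (addrI x)) /=; apply: eq_bigr => c _; by rewrite hadd.
have : (psi x - 1) * \sum_(c : F) psi c = 0 by rewrite mulrBl h mul1r subrr.
by move/eqP; rewrite mulf_eq0 subr_eq0 (negbTE hx) => /eqP.
Qed.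

Lemma scale_inv (F : finFieldType) m k r (c : F) : c != 0 ->
  #|[set A in Orank F m.+1 k.+1 r | A 0 0 == c]|
  = #|[set A in Orank F m.+1 k.+1 r | A 0 0 == 1]|.
Proof.
move=> cn.
rewrite -(card_pre _ _ _ _ (fun A => c *: A) (fun A : 'M[F]_(m.+1,k.+1) => A 0 0 == c)).
- by apply: eq_card => A; rewrite !inE mxE -{2}[c]mulr1 (inj_eq (mulfI cn)).
- exact: scalerI.
- by move=> A; rewrite !inE mxrank_scale_nz.
Qed.

Lemma fourier_eq (F : finFieldType) m k r (psi : F -> algC) (T : 'M[F]_(m.+1,k.+1)) :
  additive_char psi -> nontrivial_char psi -> \rank T = 1%N ->
  fourier_Orank r psi T = (#|Orank F m.+1 k.+1 r|)%:R
     - (#|F| * #|[set A in Orank F m.+1 k.+1 r | A 0 0 == 1]|)%:R.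
Proof.
move=> ha hn rT.
set O := Orank F m.+1 k.+1 r.
set N1 := #|[set A in O | A 0 0 == 1]|.
pose Nc (c : F) := (#|[set A in O | A 0 0 == c]|)%:R : algC.
have hS : fourier_Orank r psi T = \sum_(c : F) Nc c * psi c.
  rewrite /fourier_Orank sum_by_value; apply: eq_bigr => c _; by rewrite inv_rank1.
have hO : (#|O|)%:R = \sum_(c : F) Nc c :> algC.
  rewrite -sum1_card natr_sum.
  transitivity (\sum_(A in O) (fun=> 1 : algC) (A 0 0)); first by apply: eq_bigr.
  rewrite (sum_by_value _ _ _ (fun A : 'M[F]_(m.+1,k.+1) => A 0 0) (fun=> 1)).
  by apply: eq_bigr => c _; rewrite mulr1.
have hc : forall c, c != 0 -> Nc c = N1%:R by move=> c cn; rewrite /Nc scale_inv.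
have e1 : \sum_(c : F) Nc c * psi c = \sum_(c : F) (Nc c - N1%:R) * psi c.
  under [RHS]eq_bigr => c _ do rewrite mulrBl.
  by rewrite sumrB -mulr_sumr (sum_psi _ _ ha hn) mulr0 subr0.
have e2 : \sum_(c : F) (Nc c - N1%:R) * psi c = Nc 0 - N1%:R.
  rewrite (bigD1 0) //= big1 => [|c cn]; last by rewrite hc // subrr mul0r.
  by case: ha => -> _; rewrite mulr1 addr0.
have e3 : \sum_(c : F) Nc c = (Nc 0 - N1%:R) + (#|F| * N1)%:R.
  have -> : \sum_(c : F) Nc c = \sum_(c : F) (Nc c - N1%:R) + \sum_(c : F) N1%:R.
    by rewrite -big_split /=; apply: eq_bigr => c _; rewrite subrK.
  rewrite sumr_const; congr (_ + _).
    rewrite (bigD1 0) //= big1 => [|c cn]; last by rewrite hc // subrr.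
    by rewrite addr0.
  by rewrite natrM mulr_natl.
by rewrite hS e1 e2 hO e3 addrK.
Qed.

Local Open Scope nat_scope.
Lemma key1 a b D : 2 <= a -> 1 <= b -> a * b <= D -> (a*b - a) * D < (a*b - 1) * (D - 1).
Proof.
move=> ha hb hD.
have h1 : a * b + D <= a * D by nia.
have h2 : a <= a * b by nia.
nia.
Qed.

Lemma arith1 q a b c N N1 : 2 <= q -> q <= a -> 1 <= b -> a*b <= q*c -> 0 < N ->
  N * ((a*b - a) * c) = (a*b - 1)*(q*c - 1)*N1 -> q*N1 < N.
Proof.
move=> hq ha hb hD hN H.
have X0 : 0 < (a*b - 1)*(q*c - 1) by nia.
rewrite -(ltn_pmul2r X0).
have -> : q * N1 * ((a * b - 1) * (q * c - 1)) = N * ((a*b - a) * (q * c)).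
  move: H; set u := a*b - a; set v := a*b - 1; set w := q*c - 1 => H.
  transitivity (q * (N * (u * c))); last by ring.
  by rewrite H; ring.
rewrite ltn_pmul2l //; apply: key1 => //; exact: leq_trans hq ha.
Qed.

Lemma arith2 q a b c : 2 <= q -> q <= a -> 1 <= b -> a*b <= q*c ->
  (b-1)*(a*b + q*c - 1) * q <= 8 * ((a*b-1)*(q*c-1)).
Proof.
move=> hq ha hb hD.
set X := a * b in hD *; set D := q * c in hD *.
have hX : 2 <= X by rewrite /X; nia.
have hD2 : 2 <= D by lia.
have e1 : (b-1)*(X + D - 1) * q <= b * q * (2 * D).
  have -> : b * q * (2 * D) = b * (2 * D) * q by ring.
  apply: leq_mul => //; apply: leq_mul; [exact: leq_subr | lia].
have e2 : b * q <= X by rewrite /X mulnC; apply: leq_mul.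
clearbody X D.
have e3 : X * (2 * D) <= 8 * ((X-1)*(D-1)).
  case: X hX {e1 e2 hD} => [|[|x]] // _; case: D hD2 => [|[|d]] // _.
  rewrite !subn1 /=; nia.
apply: leq_trans e1 (leq_trans _ e3); exact: leq_mul.
Qed.
Local Open Scope ring_scope.


Lemma alg_field (N N1 a b c q : algC) : N != 0 -> a*b - 1 != 0 -> q*c - 1 != 0 ->
  N * ((a*b - a) * c) = (a*b - 1) * (q*c - 1) * N1 ->
  (N - q*N1) * b / N - 1 = - ((b - 1) * (a*b + q*c - 1) / ((a*b - 1) * (q*c - 1))).
Proof.
move=> hN h1 h2 H.
have -> : N1 = N * ((a*b - a)*c) / ((a*b-1)*(q*c-1)) by rewrite H; field; rewrite h1 h2.
by field; rewrite hN h1 h2.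
Qed.

Lemma alg_id2 (q a b c N N1 : nat) : (0 < N)%N -> (1 <= b)%N -> (2 <= a)%N -> (2 <= q)%N -> (1 <= c)%N ->
  (N * ((a*b - a) * c) = (a*b - 1)*(q*c - 1)*N1)%N ->
  ((N%:R - (q * N1)%:R) * (b%:R) / N%:R - 1 : algC)
   = - (((b-1)*(a*b + q*c - 1))%:R / ((a*b-1)*(q*c-1))%:R).
Proof.
move=> hN hb ha hq hc H.
have ab1 : (1 <= a * b)%N by rewrite muln_gt0; apply/andP; split; [apply: leq_trans ha|].
have qc1 : (1 <= q * c)%N by rewrite muln_gt0; apply/andP; split; [apply: leq_trans hq|].
have aab : (a <= a * b)%N by rewrite leq_pmulr.
have HC := congr1 (fun x : nat => x%:R : algC) H; rewrite /= !natrM !natrB // in HC.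
have s1 : (1 <= a * b + q * c)%N by rewrite addn_gt0 ab1.
rewrite !natrM !natrB ?natrD ?natrM //.
rewrite !natrM in HC.
rewrite (alg_field _ _ _ _ _ _ _ _ _ HC) //.
- by rewrite pnatr_eq0 -lt0n.
- by rewrite subr_eq0 -natrM pnatr_eq1; apply/eqP; nia.
- by rewrite subr_eq0 -natrM pnatr_eq1; apply/eqP; nia.
Qed.

Lemma q_ge2 (F : finFieldType) : (2 <= #|F|)%N.
Proof. by apply/card_gt1P; exists 0, 1; rewrite eq_sym oner_neq0. Qed.

Lemma Opos (F : finFieldType) m k r : (r <= m)%N -> (r <= k)%N -> (0 < #|Orank F m k r|)%N.
Proof. by move=> h1 h2; apply/card_gt0P; exists (pid_mx r); rewrite inE rank_pid_mx. Qed.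

Lemma setup (F : finFieldType) m k r : (r < m.+1)%N -> (m <= k)%N ->
  let q := #|F| in let a := (q ^ (m.+1 - r))%N in let b := (q ^ r)%N in let c := (q ^ k)%N in
  [/\ (2 <= q)%N, (q <= a)%N, (1 <= b)%N, (a * b <= q * c)%N & (0 < #|Orank F m.+1 k.+1 r|)%N] /\
      ((1 <= c)%N /\
   (#|Orank F m.+1 k.+1 r| * ((a * b - a) * c) =
    (a * b - 1) * (q * c - 1) * #|[set A in Orank F m.+1 k.+1 r | A ord0 ord0 == 1%R]|)%N).
Proof.
move=> hr hmk q a b c.
have hq := q_ge2 F.
have eab : (a * b = q ^ m.+1)%N by rewrite /a /b -expnD subnK // ltnW.
have eqc : (q * c = q ^ k.+1)%N by rewrite /c expnS.
split; [split|split].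
- exact: hq.
- by rewrite /a -{1}(expn1 q) leq_pexp2l // ?subn_gt0 // ltnW.
- by rewrite /b expn_gt0 ltnW.
- by rewrite eab eqc leq_pexp2l // ltnW.
- by apply: Opos => //; apply: leq_trans (ltnW hr) _.
- by rewrite /c expn_gt0 ltnW.
- by rewrite eab eqc -double_count.
Qed.

Lemma main_gen m k r : (r < m.+1)%N -> (m <= k)%N ->
  (forall (F : finFieldType) (psi : F -> algC) (T : 'M[F]_(m.+1, k.+1)),
      additive_char psi -> nontrivial_char psi -> \rank T = 1%N ->
      exists m : nat, (0 < m)%N /\ fourier_Orank r psi T = m%:R)
  /\
  (forall eps : algC, 0 < eps ->
    exists Q : nat,
      forall (F : finFieldType) (psi : F -> algC) (T : 'M[F]_(m.+1, k.+1)),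
        (Q <= #|F|)%N ->
        additive_char psi -> nontrivial_char psi -> \rank T = 1%N ->
        `| fourier_Orank r psi T * (#|F|%:R ^+ r)
             / (#|Orank F m.+1 k.+1 r|)%:R - 1 | < eps).
Proof.
move=> hr hmk; split.
  move=> F psi T ha hn rT.
  have [[hq hqa hb hab hN] [hc H]] := setup F m k r hr hmk.
  have lt := arith1 _ _ _ _ _ _ hq hqa hb hab hN H.
  exists (#|Orank F m.+1 k.+1 r| - #|F| * #|[set A in Orank F m.+1 k.+1 r | A ord0 ord0 == 1%R]|)%N.
  split; first by rewrite subn_gt0.
  by rewrite fourier_eq // natrB // ltnW.
move=> eps he.
have e8 : 0 <= 8%:R / eps :> algC by rewrite divr_ge0 // ltW.
exists (Num.bound (8%:R / eps)) => F psi T hQ ha hn rT.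
have [[hq hqa hb hab hN] [hc H]] := setup F m k r hr hmk.
rewrite fourier_eq // -natrX (alg_id2 _ _ _ _ _ _ hN hb (leq_trans hq hqa) hq hc H).
rewrite normrN ger0_norm; last by rewrite divr_ge0.
have q0 : 0 < #|F|%:R :> algC by rewrite ltr0n; apply: leq_trans hq.
apply: (le_lt_trans (y := 8%:R / #|F|%:R)).
  rewrite ler_pdivrMr; last first.
    rewrite ltr0n muln_gt0 !subn_gt0; apply/andP; split.
      by apply: leq_trans (leq_trans hq hqa) _; rewrite leq_pmulr.
    by apply: leq_trans hq _; rewrite leq_pmulr.
  rewrite mulrAC ler_pdivlMr // -!natrM ler_nat.
  exact: arith2.
rewrite ltr_pdivrMr // -ltr_pdivrMl // mulrC.
apply: lt_le_trans (archi_boundP e8) _.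
by rewrite ler_nat.
Qed.

Theorem fact8p2 (n r : nat) (hr : (r < n./2)%N) :
  (forall (F : finFieldType) (psi : F -> algC) (T : 'M[F]_(n./2, n - n./2)),
      additive_char psi -> nontrivial_char psi -> \rank T = 1%N ->
      exists m : nat, (0 < m)%N /\ fourier_Orank r psi T = m%:R)
  /\
  (forall eps : algC, 0 < eps ->
    exists Q : nat,
      forall (F : finFieldType) (psi : F -> algC) (T : 'M[F]_(n./2, n - n./2)),
        (Q <= #|F|)%N ->
        additive_char psi -> nontrivial_char psi -> \rank T = 1%N ->
        `| fourier_Orank r psi T * (#|F|%:R ^+ r)
             / (#|Orank F (n./2) (n - n./2) r|)%:R - 1 | < eps).
Proof.
have hle : (n./2 <= n - n./2)%N.
  have := odd_double_half n; rewrite -addnn; move: (odd n) (n./2)%N => o h; lia.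
move: hr hle; move: (n./2)%N (n - n./2)%N => M K.
case: M => [//|m] hr hle; case: K hle => [//|k] hle.
exact: main_gen.
Qed.
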